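(* Assume $\sum_{i=1}^M b_i<1$ and let $\mathbf r^\star(\epsilon)$ be the energy-scarce solution. Then $\lim_{\epsilon\to0^+}|\bar\Delta(\mathbf r^\star(\epsilon))-\bar\Delta_{\mathrm{opt}}(\epsilon)|=0$, and $$\lim_{\epsilon\to0^+}\bar\Delta_{\mathrm{opt}}(\epsilon)=\sum_{i=1}^M\Big[\frac{w_i}{b_i}+w_i\Big].$$
   Context: Fix an integer $M\ge1$, weights $w_1,\dots,w_M>0$, constants $b_1,\dots,b_M>0$, and $\epsilon>0$. For $\mathbf r\in(0,\infty)^M$ write $S(\mathbf r)=\sum_{i=1}^M r_i$ and define $$\bar\Delta(\mathbf r)=\sum_{l=1}^M \frac{w_l e^{-r_l\epsilon}}{r_l}\, e^{\epsilon S(\mathbf r)}\big(1+S(\mathbf r)\big)+\sum_{l=1}^M w_l,\qquad \sigma_l(\mathbf r)=\frac{(1-e^{-r_l\epsilon})S(\mathbf r)+r_le^{-r_l\epsilon}}{S(\mathbf r)+1}.$$ Problem 1: minimize $\bar\Delta(\mathbf r)$ over $\mathbf r\in(0,\infty)^M$ subject to $\sigma_l(\mathbf r)\le b_l$ for all $l$; its optimal (infimum) value is $\bar\Delta_{\mathrm{opt}}(\epsilon)$. Energy-scarce solution (when $B:=\sum_i b_i<1$): for each $l$ let $$c_l=\frac{2b_l(1-B)^2}{b_l(1-B)^2+\sqrt{b_l^2(1-B)^4+4b_l^2(1-B)^2(B-b_l)\epsilon}},$$ let $x^\star=\frac{\min_l c_l}{1-B}$, $\beta^\star=\sum_{i=1}^M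 \frac{1}{\sqrt{w_i}}$, and set $r^\star_l=\min\{b_l,\beta^\star\sqrt{w_l}\}\,x^\star$. *)

(* Defs.v *)
From Stdlib Require Import Reals Lra ClassicalEpsilon.
Open Scope R_scope.

(* Finite sum over indices 0 .. n-1 (vectors are functions nat -> R, indices 0..M-1). *)
Fixpoint fsum (n : nat) (f : nat -> R) : R :=
  match n with
  | O => 0
  | S k => fsum k f + f k
  end.

(* Minimum over indices 0 .. n-1 (for n >= 1; fmin 0 f := f 0 is a dummy). *)
Fixpoint fmin (n : nat) (f : nat -> R) : R :=
  match n with
  | O => f O
  | S O => f O
  | S k => Rmin (fmin k f) (f k)
  end.

Definition S_r (M : nat) (r : nat -> R) : R := fsum M r.

Definition Delta_bar (M : nat) (w : nat -> R) (eps : R) (r : nat -> R) : R :=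
  fsum M (fun l => w l * exp (- r l * eps) / r l * exp (eps * S_r M r) * (1 + S_r M r))
  + fsum M w.

Definition sigma (M : nat) (eps : R) (r : nat -> R) (l : nat) : R :=
  ((1 - exp (- r l * eps)) * S_r M r + r l * exp (- r l * eps)) / (S_r M r + 1).

Definition feasible (M : nat) (b : nat -> R) (eps : R) (r : nat -> R) : Prop :=
  (forall i, (i < M)%nat -> 0 < r i) /\
  (forall l, (l < M)%nat -> sigma M eps r l <= b l).

Definition is_glb (E : R -> Prop) (m : R) : Prop :=
  (forall x, E x -> m <= x) /\ (forall m', (forall x, E x -> m' <= x) -> m' <= m).

(* the infimum of a set (chosen via classical epsilon; it is the greatest
   lower bound whenever one exists) *)
Definition Rinf (E : R -> Prop) : R := epsilon (inhabits 0) (is_glb E).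

Definition Delta_opt (M : nat) (w b : nat -> R) (eps : R) : R :=
  Rinf (fun v => exists r, feasible M b eps r /\ v = Delta_bar M w eps r).

Definition Bsum (M : nat) (b : nat -> R) : R := fsum M b.

Definition c_coef (M : nat) (b : nat -> R) (eps : R) (l : nat) : R :=
  let B := Bsum M b in
  2 * b l * (1 - B) ^ 2 /
  (b l * (1 - B) ^ 2
   + sqrt (b l ^ 2 * (1 - B) ^ 4 + 4 * b l ^ 2 * (1 - B) ^ 2 * (B - b l) * eps)).

Definition x_star (M : nat) (b : nat -> R) (eps : R) : R :=
  fmin M (c_coef M b eps) / (1 - Bsum M b).

Definition beta_star (M : nat) (w : nat -> R) : R :=
  fsum M (fun i => 1 / sqrt (w i)).

Definition r_star (M : nat) (w b : nat -> R) (eps : R) (l : nat) : R :=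
  Rmin (b l) (beta_star M w * sqrt (w l)) * x_star M b eps.

(* Main.v *)
Require Import Defs.
From Stdlib Require Import Reals Lra Lia Psatz ClassicalEpsilon.
Open Scope R_scope.

Lemma fsum_ext n f g : (forall i, (i < n)%nat -> f i = g i) -> fsum n f = fsum n g.
Proof. induction n; simpl; intros H; auto. rewrite IHn by (intros; apply H; lia). rewrite H by lia. auto. Qed.

Lemma fsum_le n f g : (forall i, (i<n)%nat -> f i <= g i) -> fsum n f <= fsum n g.
Proof. induction n; simpl; intros H; [lra|]. assert (fsum n f <= fsum n g) by (apply IHn; intros; apply H; lia). assert (f n <= g n) by (apply H; lia). lra. Qed.

Lemma fsum_plus n f g : fsum n (fun i => f i + g i) = fsum n f + fsum n g.
Proof. induction n; simpl; [lra|]. rewrite IHn; lra. Qed.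

Lemma fsum_scal n c f : fsum n (fun i => c * f i) = c * fsum n f.
Proof. induction n; simpl; [lra|]. rewrite IHn; lra. Qed.

Lemma fsum_zero n : fsum n (fun _ => 0) = 0.
Proof. induction n; simpl; [lra|]. rewrite IHn; lra. Qed.

Lemma fsum_nonneg n f : (forall i, (i<n)%nat -> 0 <= f i) -> 0 <= fsum n f.
Proof. intros H. rewrite <- (fsum_zero n). apply fsum_le; auto. Qed.

Lemma fsum_ge_term n f l : (forall i, (i<n)%nat -> 0 <= f i) -> (l < n)%nat -> f l <= fsum n f.
Proof. induction n; intros H Hl; [lia|]. simpl. destruct (Nat.eq_dec l n).
 - subst. pose proof (fsum_nonneg n f (fun i Hi => H i ltac:(lia))). lra.
 - assert (f l <= fsum n f) by (apply IHn; [intros; apply H; lia| lia]). assert (0 <= f n) by (apply H; lia). lra. Qed.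

Lemma fmin_bounds k f lo hi : (forall i, (i < S k)%nat -> lo <= f i <= hi) -> lo <= fmin (S k) f <= hi.
Proof. induction k; intros H. simpl. apply H; lia.
 change (fmin (S (S k)) f) with (Rmin (fmin (S k) f) (f (S k))).
 assert (lo <= fmin (S k) f <= hi) by (apply IHk; intros; apply H; lia).
 assert (lo <= f (S k) <= hi) by (apply H; lia).
 unfold Rmin; destruct (Rle_dec _ _); lra. Qed.

Lemma Delta_bar_ext M w eps r r' : (forall i, (i<M)%nat -> r i = r' i) -> Delta_bar M w eps r = Delta_bar M w eps r'.
Proof. intros H. unfold Delta_bar. assert (HS: S_r M r = S_r M r') by (apply fsum_ext; auto). rewrite HS. f_equal. apply fsum_ext. intros i Hi. rewrite H by auto. reflexivity. Qed.

Lemma exp_le_mono a c : a <= c -> exp a <= exp c.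
Proof. intros [H|H]. left; apply exp_increasing; auto. subst; lra. Qed.

Lemma exp_ge1 u : 0 <= u -> 1 <= exp u.
Proof. intros. pose proof (exp_ineq1_le u). lra. Qed.

Lemma h_bound u : 0 <= u <= 1/2 -> exp u * (1 + u) - 1 <= 4 * u.
Proof. intros H. pose proof (exp_ineq1_le (-u)). pose proof (exp_pos u).
 assert (exp u * exp (-u) = 1) by (rewrite <- exp_plus; replace (u + - u) with 0 by ring; apply exp_0).
 assert (exp u * (1 - u) <= 1) by nra.
 assert (exp u <= 1 + 2*u) by nra. nra. Qed.

Lemma B_ge M b l : (forall i, (i<M)%nat -> 0 < b i) -> (l < M)%nat -> b l <= Bsum M b.
Proof. intros Hb Hl. apply fsum_ge_term; auto. intros; left; auto. Qed.
Lemma est M w b eps x (HM: (1<=M)%nat) (Hw: forall i, (i<M)%nat -> 0 < w i) (Hb: forall i, (i<M)%nat -> 0 < b i) (HB: Bsum M b < 1) (He: 0 < eps)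
  (Hx1: (1 - Bsum M b)/((1-Bsum M b)^2 + eps * Bsum M b) <= x) (Hx2: x <= 1/(1-Bsum M b)) :
  fsum M (fun i => w i / b i + w i) <= Delta_bar M w eps (fun l => b l * x) <=
  fsum M (fun i => w i / b i + w i) + fsum M (fun i => w i / b i) * (exp (eps*(Bsum M b / (1 - Bsum M b))) * (1 + eps*(Bsum M b / (1 - Bsum M b))) - 1).
Proof.
  set (B := Bsum M b) in *. set (K := B / (1 - B)).
  assert (HB0 : 0 < B). { apply Rlt_le_trans with (b 0%nat). apply Hb; lia. apply B_ge; auto; lia. }
  assert (Ht : 0 < (1 - B)/((1-B)^2 + eps * B)). { apply Rdiv_lt_0_compat; nra. }
  assert (Hx0 : 0 < x) by lra.
  assert (HS: S_r M (fun l => b l * x) = B * x).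
  { unfold S_r. transitivity (fsum M (fun l => x * b l)). apply fsum_ext; intros; ring. rewrite fsum_scal. unfold B, Bsum; ring. }
  assert (Hq1 : 1 <= 1/x + B).
  { assert (x*(1-B) <= 1). { assert (x*(1-B) <= 1/(1-B)*(1-B)) by (apply Rmult_le_compat_r; lra). replace (1/(1-B)*(1-B)) with 1 in H by (field; lra). exact H. }
    assert (1 - B <= 1/x). { replace (1-B) with ((x*(1-B))/x) by (field; lra). unfold Rdiv. apply Rmult_le_compat_r; [left; apply Rinv_0_lt_compat; lra | lra]. } lra. }
  assert (Hq2 : 1/x + B <= 1 + eps * K).
  { assert (1/x <= ((1-B)^2 + eps * B)/(1-B)).
    { unfold Rdiv at 1. rewrite Rmult_1_l.
      replace (((1-B)^2 + eps * B)/(1-B)) with (/ ((1 - B)/((1-B)^2 + eps * B))) by (field; nra).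
      apply Rinv_le_contravar; auto. }
    unfold K. replace (1 + eps * (B / (1 - B))) with (((1-B)^2 + eps * B)/(1-B) + B) by (field; lra). lra. }
  assert (HBx : B * x <= K).
  { unfold K. replace (B/(1-B)) with (B * (1/(1-B))) by (field; lra). apply Rmult_le_compat_l; lra. }
  assert (Hterm : forall i, (i<M)%nat ->
    w i / b i <= w i * exp (- (b i * x) * eps) / (b i * x) * exp (eps * (B * x)) * (1 + B * x) <=
    w i / b i * (exp (eps * K) * (1 + eps * K))).
  { intros i Hi. pose proof (Hw i Hi). pose proof (Hb i Hi). pose proof (B_ge M b i Hb Hi) as Hbi. fold B in Hbi.
    replace (w i * exp (- (b i * x) * eps) / (b i * x) * exp (eps * (B * x)) * (1 + B * x))
      with (w i / b i * exp (- (b i * x) * eps + eps * (B * x)) * (1/x + B)) by (rewrite exp_plus; field; lra).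
    assert (0 < w i / b i) by (apply Rdiv_lt_0_compat; auto).
    assert (0 <= eps*x*(B-b i)) by (apply Rmult_le_pos; [apply Rmult_le_pos|]; lra).
    assert (0 <= b i * x * eps) by (apply Rmult_le_pos; [apply Rmult_le_pos|]; lra).
    assert (eps * (B*x) <= eps * K) by (apply Rmult_le_compat_l; lra).
    assert (1 <= exp (- (b i * x) * eps + eps * (B * x))) by (apply exp_ge1; lra).
    assert (exp (- (b i * x) * eps + eps * (B * x)) <= exp (eps * K)) by (apply exp_le_mono; lra).
    set (a := w i / b i) in *. set (e := exp (- (b i * x) * eps + eps * (B * x))) in *.
    set (q := 1/x + B) in *. set (eK := exp (eps * K)) in *.
    assert (1 <= e * q) by nra. assert (e * q <= eK * (1 + eps * K)) by (apply Rmult_le_compat; lra).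
    split.
    + rewrite Rmult_assoc. nra.
    + rewrite Rmult_assoc. apply Rmult_le_compat_l; lra. }
  unfold Delta_bar. rewrite HS. rewrite fsum_plus. split.
  - assert (fsum M (fun i => w i / b i) <= fsum M (fun l => w l * exp (- (b l * x) * eps) / (b l * x) * exp (eps * (B * x)) * (1 + B * x))) by (apply fsum_le; intros; apply Hterm; auto). lra.
  - assert (fsum M (fun l => w l * exp (- (b l * x) * eps) / (b l * x) * exp (eps * (B * x)) * (1 + B * x)) <= fsum M (fun i => (exp (eps * K) * (1 + eps * K)) * (w i / b i))).
    { apply fsum_le; intros i Hi. rewrite (Rmult_comm _ (w i / b i)). apply Hterm; auto. }
    rewrite fsum_scal in H. fold K. nra.
Qed.

Lemma feas_t M b eps (HM: (1<=M)%nat) (Hb: forall i, (i<M)%nat -> 0 < b i) (HB: Bsum M b < 1) (He: 0 < eps) :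
  feasible M b eps (fun l => b l * ((1 - Bsum M b)/((1-Bsum M b)^2 + eps * Bsum M b))).
Proof.
  set (B := Bsum M b) in *. set (t := (1 - B)/((1-B)^2 + eps * B)).
  assert (HB0 : 0 < B). { apply Rlt_le_trans with (b 0%nat). apply Hb; lia. apply B_ge; auto; lia. }
  assert (Ht : 0 < t). { apply Rdiv_lt_0_compat; nra. }
  assert (Ht2 : t * ((1-B)^2 + eps * B) = 1 - B) by (unfold t; field; nra).
  assert (Htle : t <= 1/(1-B)). { unfold t. apply Rmult_le_reg_r with (1-B). lra. 
     replace (1/(1-B)*(1-B)) with 1 by (field; lra). apply Rmult_le_reg_r with ((1-B)^2 + eps * B). nra.
     replace ((1 - B) / ((1 - B) ^ 2 + eps * B) * (1 - B) * ((1 - B) ^ 2 + eps * B)) with ((1-B)*(1-B)) by (field; nra). nra. }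
  assert (Hkey : eps * B * t * t + t * (1 - B) <= 1).
  { assert (t * (1-B) <= 1). { assert (t*(1-B) <= 1/(1-B)*(1-B)) by (apply Rmult_le_compat_r; lra). replace (1/(1-B)*(1-B)) with 1 in H by (field; lra). exact H. }
    assert (0 <= eps*B*t) by (left; apply Rmult_lt_0_compat; [apply Rmult_lt_0_compat|]; lra).
    assert (eps * B * t * t * (1-B) <= eps * B * t) by (replace (eps * B * t * t * (1-B)) with ((eps*B*t) * (t*(1-B))) by ring; nra).
    assert ((eps * B * t * t + t * (1 - B)) * (1-B) <= 1 * (1-B)).
    { replace ((eps * B * t * t + t * (1 - B)) * (1-B)) with (eps * B * t * t * (1-B) + t*(1-B)^2) by ring.
      replace (1 * (1-B)) with (t * ((1-B)^2 + eps * B)) by lra. lra. }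
    apply Rmult_le_reg_r with (1-B); lra. }
  assert (HS: S_r M (fun l => b l * t) = B * t).
  { unfold S_r. transitivity (fsum M (fun l => t * b l)). apply fsum_ext; intros; ring. rewrite fsum_scal. unfold B, Bsum; ring. }
  split.
  - intros i Hi. pose proof (Hb i Hi). fold B t. nra.
  - intros l Hl. pose proof (Hb l Hl). fold B t. unfold Defs.sigma. rewrite HS.
    assert (Hp : 0 < b l * t * eps) by (apply Rmult_lt_0_compat; [apply Rmult_lt_0_compat|]; lra).
    assert (HBt : 0 < B * t) by (apply Rmult_lt_0_compat; lra).
    set (E := exp (- (b l * t) * eps)).
    assert (HE1 : 1 - E <= b l * t * eps) by (unfold E; pose proof (exp_ineq1_le (- (b l * t) * eps)); lra).
    assert (HE2 : E <= 1) by (unfold E; rewrite <- exp_0; apply exp_le_mono; lra).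
    assert (HE0 : 0 < E) by (apply exp_pos).
    assert (Hnum : (1 - E) * (B * t) + b l * t * E <= b l * (B * t + 1)).
    { assert ((1 - E) * (B * t) <= b l * t * eps * (B*t)) by (apply Rmult_le_compat_r; lra).
      assert (b l * t * E <= b l * t) by (pose proof (Rmult_lt_0_compat _ _ H Ht); nra).
      assert (b l * t * eps * (B*t) + b l * t = b l * (eps * B * t * t + t * (1 - B)) + b l * B * t) by ring.
      assert (b l * (eps * B * t * t + t * (1 - B)) <= b l * 1) by (apply Rmult_le_compat_l; lra).
      lra. }
    apply Rmult_le_reg_r with (B * t + 1). nra.
    replace (((1 - E) * (B * t) + b l * t * E) / (B * t + 1) * (B * t + 1)) with ((1 - E) * (B * t) + b l * t * E) by (field; nra). lra.
Qed.

Lemma div_anti n d1 d2 : 0 <= n -> 0 < d1 -> d1 <= d2 -> n / d2 <= n / d1.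
Proof. intros. unfold Rdiv. apply Rmult_le_compat_l; auto. apply Rinv_le_contravar; auto. Qed.

Lemma c_bounds M b eps l (HM: (1<=M)%nat) (Hb: forall i, (i<M)%nat -> 0 < b i) (HB: Bsum M b < 1) (He: 0 < eps) (Hl : (l < M)%nat) :
  (1 - Bsum M b)^2/((1-Bsum M b)^2 + eps * Bsum M b) <= c_coef M b eps l <= 1.
Proof.
  unfold c_coef. set (B := Bsum M b) in *.
  pose proof (Hb l Hl) as Hbl. pose proof (B_ge M b l Hb Hl) as HBl. fold B in HBl.
  set (bb := b l) in *. set (a := bb * (1-B)^2).
  assert (Ha : 0 < a) by (unfold a; apply Rmult_lt_0_compat; [lra| apply pow_lt; lra]).
  set (y := 4 * bb ^ 2 * (1 - B) ^ 2 * (B - bb) * eps).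
  assert (Hy : 0 <= y). { unfold y. apply Rmult_le_pos; [|lra]. apply Rmult_le_pos; [|lra].
     apply Rmult_le_pos; [apply Rmult_le_pos; [lra | apply pow_le; lra] | apply pow_le; lra]. }
  replace (bb ^ 2 * (1 - B) ^ 4) with (a * a) by (unfold a; ring).
  fold y.
  set (z := 2 * bb * (B - bb) * eps).
  assert (Hz : 0 <= z) by (unfold z; apply Rmult_le_pos; [apply Rmult_le_pos|]; lra).
  assert (Hs1 : a <= sqrt (a*a + y)).
  { rewrite <- (sqrt_square a) at 1 by lra. apply sqrt_le_1_alt. lra. }
  assert (Hs2 : sqrt (a*a + y) <= a + z).
  { rewrite <- (sqrt_square (a+z)) by lra. apply sqrt_le_1_alt.
    assert (y = 2 * a * z) by (unfold y, a, z; ring). nra. }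
  replace (2 * bb * (1 - B) ^ 2) with (2 * a) by (unfold a; ring).
  split.
  - replace ((1 - B) ^ 2 / ((1 - B) ^ 2 + eps * B)) with (2 * a / (2 * bb * ((1 - B) ^ 2 + eps * B)))
      by (unfold a; field; split; nra).
    apply div_anti; try lra.
    assert (z <= 2 * bb * B * eps). { unfold z. assert (0 <= 2*bb*bb*eps) by (apply Rmult_le_pos; [apply Rmult_le_pos|]; lra). nra. }
    assert (2*bb*((1-B)^2+eps*B) = 2*a + 2*bb*B*eps) by (unfold a; ring). lra.
  - apply Rle_trans with (2*a/(2*a)). apply div_anti; lra. right; field; lra.
Qed.

Lemma rstar_eq M w b eps l (HM: (1<=M)%nat) (Hw: forall i, (i<M)%nat -> 0 < w i) (Hb: forall i, (i<M)%nat -> 0 < b i) (HB: Bsum M b < 1) (Hl : (l < M)%nat) :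
  r_star M w b eps l = b l * x_star M b eps.
Proof.
  unfold r_star. f_equal. apply Rmin_left.
  pose proof (B_ge M b l Hb Hl).
  assert (Hs : 0 < sqrt (w l)) by (apply sqrt_lt_R0; auto).
  assert (1 / sqrt (w l) <= beta_star M w).
  { unfold beta_star. apply (fsum_ge_term M (fun i => 1 / sqrt (w i))); auto.
    intros i Hi. left. apply Rdiv_lt_0_compat; [lra| apply sqrt_lt_R0; auto]. }
  assert (1 <= beta_star M w * sqrt (w l)).
  { replace 1 with (1 / sqrt (w l) * sqrt (w l)) at 1 by (field; lra). apply Rmult_le_compat_r; lra. }
  lra.
Qed.

Lemma glb_ok (E : R -> Prop) L : (exists v, E v) -> (forall v, E v -> L <= v) -> is_glb E (Rinf E).
Proof.
  intros [v0 Hv0] Hlb. unfold Rinf. apply epsilon_spec.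
  destruct (completeness (fun x => E (-x))) as [m [Hm1 Hm2]].
  - exists (-L). intros x Hx. specialize (Hlb _ Hx). lra.
  - exists (-v0). rewrite Ropp_involutive. auto.
  - exists (-m). split.
    + intros x Hx. assert (-x <= m) by (apply Hm1; rewrite Ropp_involutive; auto). lra.
    + intros m' Hm'. assert (m <= -m'). { apply Hm2. intros x Hx. specialize (Hm' _ Hx). lra. } lra.
Qed.

Lemma bounds_eps M w b eps (HM: (1<=M)%nat) (Hw: forall i, (i<M)%nat -> 0 < w i) (Hb: forall i, (i<M)%nat -> 0 < b i) (HB: Bsum M b < 1) (He: 0 < eps) :
  let L := fsum M (fun i => w i / b i + w i) in
  let G := fsum M (fun i => w i / b i) * (exp (eps*(Bsum M b / (1 - Bsum M b))) * (1 + eps*(Bsum M b / (1 - Bsum M b))) - 1) in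
  (L <= Delta_opt M w b eps <= L + G) /\ (L <= Delta_bar M w eps (r_star M w b eps) <= L + G).
Proof.
  intros L G.
  set (B := Bsum M b) in *.
  assert (HB0 : 0 < B). { apply Rlt_le_trans with (b 0%nat). apply Hb; lia. apply B_ge; auto; lia. }
  set (t := (1 - B)/((1-B)^2 + eps * B)).
  assert (Ht : 0 < t). { apply Rdiv_lt_0_compat; nra. }
  assert (Htle : t <= 1/(1-B)). { unfold t. apply Rmult_le_reg_r with (1-B). lra.
     replace (1/(1-B)*(1-B)) with 1 by (field; lra). apply Rmult_le_reg_r with ((1-B)^2 + eps * B). nra.
     replace ((1 - B) / ((1 - B) ^ 2 + eps * B) * (1 - B) * ((1 - B) ^ 2 + eps * B)) with ((1-B)*(1-B)) by (field; nra). nra. }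
  split.
  - set (E := fun v => exists r, feasible M b eps r /\ v = Delta_bar M w eps r).
    assert (Hlb : forall v, E v -> L <= v).
    { intros v [r [[Hpos Hsig] ->]]. unfold Delta_bar. unfold L. rewrite fsum_plus.
      assert (fsum M (fun i => w i / b i) <= fsum M (fun l => w l * exp (- r l * eps) / r l * exp (eps * S_r M r) * (1 + S_r M r))).
      { apply fsum_le. intros l Hl.
        pose proof (Hpos l Hl). pose proof (Hw l Hl). pose proof (Hb l Hl). specialize (Hsig l Hl).
        assert (HSr : r l <= S_r M r) by (apply fsum_ge_term; auto; intros; left; auto).
        set (S := S_r M r) in *.
        set (x := r l * eps) in *.
        assert (Hx : 0 <= x) by (unfold x; apply Rmult_le_pos; lra).
        assert (HE : 0 < exp (- r l * eps)) by apply exp_pos.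
        assert (HEprod : 1 <= exp (- r l * eps) * exp (eps * S)).
        { rewrite <- exp_plus. apply exp_ge1. nra. }
        (* sigma >= r/(S+1) *)
        unfold Defs.sigma in Hsig. fold S in Hsig.
        assert (Hnum : r l <= (1 - exp (- r l * eps)) * S + r l * exp (- r l * eps)).
        { assert (exp (- r l * eps) <= 1) by (rewrite <- exp_0; apply exp_le_mono; unfold x in Hx; lra). nra. }
        assert (Hrl : r l <= b l * (S + 1)).
        { apply Rle_trans with ((1 - exp (- r l * eps)) * S + r l * exp (- r l * eps)); auto.
          replace ((1 - exp (- r l * eps)) * S + r l * exp (- r l * eps)) with (((1 - exp (- r l * eps)) * S + r l * exp (- r l * eps)) / (S + 1) * (S+1)) by (field; lra).
          apply Rmult_le_compat_r; lra. }
        replace (w l * exp (- r l * eps) / r l * exp (eps * S) * (1 + S)) with (w l * (exp (- r l * eps) * exp (eps * S)) * ((1 + S) / r l)) by (field; lra).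
        assert (1 / b l <= (1 + S) / r l).
        { apply Rmult_le_reg_r with (b l * r l). nra. replace (1 / b l * (b l * r l)) with (r l) by (field; lra).
          replace ((1 + S) / r l * (b l * r l)) with (b l * (S+1)) by (field; lra). lra. }
        assert (0 < 1 / b l) by (apply Rdiv_lt_0_compat; lra).
        replace (w l / b l) with (w l * 1 * (1 / b l)) by (field; lra).
        apply Rmult_le_compat; try nra. }
      lra. }
    assert (Hne : E (Delta_bar M w eps (fun l => b l * t))) by (exists (fun l => b l * t); split; auto; apply feas_t; auto).
    destruct (glb_ok E L (ex_intro _ _ Hne) Hlb) as [G1 G2].
    pose proof (G1 _ Hne) as Hup. pose proof (G2 L Hlb) as Hlo.
    fold E. unfold Delta_opt. fold E.
    pose proof (est M w b eps t HM Hw Hb HB He ltac:(unfold t; fold B; lra) Htle) as Hest. fold B L in Hest.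
    unfold G. fold B. lra.
  - rewrite (Delta_bar_ext M w eps _ (fun l => b l * x_star M b eps)) by (intros; apply rstar_eq; auto).
    apply est; auto.
    + unfold x_star. fold B. destruct M as [|k]; [lia|].
      assert (Hf : (1 - B)^2/((1-B)^2 + eps * B) <= fmin (S k) (c_coef (S k) b eps) <= 1).
      { apply fmin_bounds. intros i Hi. apply c_bounds; auto. }
      fold t. replace t with (((1 - B)^2/((1-B)^2 + eps * B)) / (1-B)) by (unfold t; field; nra).
      unfold Rdiv at 1 3. apply Rmult_le_compat_r; [left; apply Rinv_0_lt_compat; lra | lra].
    + unfold x_star. fold B. destruct M as [|k]; [lia|].
      assert (Hf : (1 - B)^2/((1-B)^2 + eps * B) <= fmin (S k) (c_coef (S k) b eps) <= 1).
      { apply fmin_bounds. intros i Hi. apply c_bounds; auto. }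
      unfold Rdiv. apply Rmult_le_compat_r; [left; apply Rinv_0_lt_compat; lra | lra].
Qed.

Theorem corollary2 (M : nat) (w b : nat -> R)
  (HM : (1 <= M)%nat)
  (Hw : forall i, (i < M)%nat -> 0 < w i)
  (Hb : forall i, (i < M)%nat -> 0 < b i)
  (HB : Bsum M b < 1) :
  (forall eta, 0 < eta -> exists delta, 0 < delta /\
     forall eps, 0 < eps < delta ->
       Rabs (Rabs (Delta_bar M w eps (r_star M w b eps) - Delta_opt M w b eps) - 0) < eta)
  /\
  (forall eta, 0 < eta -> exists delta, 0 < delta /\
     forall eps, 0 < eps < delta ->
       Rabs (Delta_opt M w b eps - fsum M (fun i => w i / b i + w i)) < eta).
Proof.
  set (B := Bsum M b) in *.
  assert (HB0 : 0 < B). { apply Rlt_le_trans with (b 0%nat). apply Hb; lia. apply B_ge; auto; lia. }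
  set (K := B / (1 - B)).
  assert (HK : 0 <= K) by (unfold K; left; apply Rdiv_lt_0_compat; lra).
  set (W := fsum M (fun i => w i / b i)).
  assert (HW : 0 <= W) by (apply fsum_nonneg; intros; left; apply Rdiv_lt_0_compat; auto).
  assert (Hmain : forall eta, 0 < eta -> exists delta, 0 < delta /\ forall eps, 0 < eps < delta ->
     let L := fsum M (fun i => w i / b i + w i) in
     (L <= Delta_opt M w b eps <= L + eta) /\ (L <= Delta_bar M w eps (r_star M w b eps) <= L + eta)).
  { intros eta Heta.
    exists (Rmin (1/(2*(K+1))) (eta/(4*(K+1)*(W+1)))). split.
    - apply Rmin_pos; apply Rdiv_lt_0_compat; nra.
    - intros eps [He1 He2] L.
      assert (Hd1 : eps < 1/(2*(K+1))) by (eapply Rlt_le_trans; [exact He2| apply Rmin_l]).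
      assert (Hd2 : eps < eta/(4*(K+1)*(W+1))) by (eapply Rlt_le_trans; [exact He2| apply Rmin_r]).
      assert (Hu1 : eps * (K+1) < 1/2).
      { apply Rmult_lt_compat_r with (r := K+1) in Hd1; [|lra].
        replace (1 / (2 * (K + 1)) * (K + 1)) with (1/2) in Hd1 by (field; lra). lra. }
      assert (Hu2 : eps * (4*(K+1)*(W+1)) < eta).
      { apply Rmult_lt_compat_r with (r := 4*(K+1)*(W+1)) in Hd2; [|nra].
        replace (eta / (4 * (K + 1) * (W + 1)) * (4 * (K + 1) * (W + 1))) with eta in Hd2 by (field; nra). lra. }
      assert (Hh : exp (eps*K) * (1 + eps*K) - 1 <= 4 * (eps * K)) by (apply h_bound; nra).
      assert (HG : W * (exp (eps*K) * (1 + eps*K) - 1) <= eta).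
      { assert (W * (exp (eps*K) * (1 + eps*K) - 1) <= W * (4*(eps*K))) by (apply Rmult_le_compat_l; auto). nra. }
      destruct (bounds_eps M w b eps HM Hw Hb HB He1) as [H1 H2].
      fold B K W L in H1, H2. lra. }
  split.
  - intros eta Heta. destruct (Hmain (eta/2) ltac:(lra)) as [d [Hd Hd']]. exists d; split; auto.
    intros eps Heps. destruct (Hd' eps Heps) as [H1 H2].
    rewrite Rminus_0_r, Rabs_Rabsolu. unfold Rabs; destruct (Rcase_abs _); lra.
  - intros eta Heta. destruct (Hmain (eta/2) ltac:(lra)) as [d [Hd Hd']]. exists d; split; auto.
    intros eps Heps. destruct (Hd' eps Heps) as [H1 H2].
    unfold Rabs; destruct (Rcase_abs _); lra.
Qed.
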